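(* For integers $n\ge k\ge 0$ let $P(n,k)=k!\,[2(n-k)-1]!!\,\binom{2n-k-1}{2(n-k)}$. Then for all $k,\ell\in\{0,1,2,\dots\}$, \[ \sum_{m=0}^{k}(-1)^{m}\binom{k}{m}\binom{m/2}{\ell}= \begin{cases}0, & k>\ell,\\[2pt] \dfrac{(-1)^{\ell}}{(2\ell)!!}P(\ell,k), & \ell\ge k.\end{cases} \]
   Context: Here $\binom{x}{\ell}=\frac{x(x-1)\cdots(x-\ell+1)}{\ell!}$ for real $x$. Double factorials: $(2j)!!=2^j j!$, with $0!!=1$, and $(2j-1)!!=1\cdot3\cdots(2j-1)$ for $j\ge1$, with $(-1)!!=1$. The binomial coefficient $\binom{2n-k-1}{2(n-k)}$ equals $1$ when $n=k$, including the case $n=k=0$, where it is $\binom{-1}{0}=1$. *)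

(* Defs.v *)
From mathcomp Require Import all_boot all_order all_algebra.
Set Implicit Arguments. Unset Strict Implicit. Unset Printing Implicit Defensive.
Import Order.TTheory GRing.Theory Num.Theory.
Local Open Scope ring_scope.

Definition gbinom (x : rat) (l : nat) : rat :=
  (\prod_(i < l) (x - i%:R)) / (l`!)%:R.

(* even double factorial (2j)!! = 2^j j! *)
Definition even_dfact (j : nat) : nat := (2 ^ j * j`!)%N.

(* odd double factorial (2j-1)!! = 1*3*...*(2j-1), with (-1)!! = 1 *)
Definition odd_dfact (j : nat) : nat := (\prod_(i < j) (2 * i + 1))%N.

Definition Pnk (n k : nat) : rat :=
  (k`!)%:R * (odd_dfact (n - k))%:R
  * gbinom ((2 * n)%:R - k%:R - 1) (2 * (n - k)).

(* Main.v *)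
Require Import Defs.
From mathcomp Require Import all_boot all_order all_algebra.
From mathcomp Require Import ring lra zify.
Import Order.TTheory GRing.Theory Num.Theory.
Local Open Scope ring_scope.

Lemma nzS (j:nat) : 1 + j%:R != 0 :> rat.
Proof. by rewrite addrC natr1 pnatr_eq0. Qed.
Lemma nzfact j : j`!%:R != 0 :> rat.
Proof. by rewrite pnatr_eq0 -lt0n fact_gt0. Qed.

Lemma gb0 x : gbinom x 0 = 1.
Proof. by rewrite /gbinom big_ord0 fact0 divr1. Qed.

Lemma gbS x j : gbinom x j.+1 = gbinom x j * (x - j%:R) / (j.+1)%:R.
Proof.
rewrite /gbinom big_ord_recr /= factS natrM.
have h1 : (j.+1)%:R != 0 :> rat by rewrite pnatr_eq0.
have h2 : (j`!)%:R != 0 :> rat by rewrite pnatr_eq0 -lt0n fact_gt0.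
by field; rewrite ?nzS ?nzfact.
Qed.

Lemma gb_pascal x l : gbinom (x + 1) l.+1 - gbinom x l.+1 = gbinom x l.
Proof.
rewrite /gbinom big_ord_recl big_ord_recr /=.
have -> : \prod_(i < l) (x + 1 - (bump 0 i)%:R) = \prod_(i < l) (x - i%:R).
  by apply: eq_bigr => i _; rewrite /bump /= add1n -addn1 natrD; ring.
rewrite factS natrM.
have h1 : (l.+1)%:R != 0 :> rat by rewrite pnatr_eq0.
have h2 : (l`!)%:R != 0 :> rat by rewrite pnatr_eq0 -lt0n fact_gt0.
rewrite -[(l.+1)%:R]natr1.
by field; rewrite ?nzS ?nzfact ?natr1 ?pnatr_eq0.
Qed.

Lemma gb_nat n j : gbinom n%:R j = ('C(n, j))%:R.
Proof.
elim: j => [|j IH]; first by rewrite gb0 bin0.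
rewrite gbS IH.
have h1 : (j.+1)%:R != 0 :> rat by rewrite pnatr_eq0.
have e := mul_bin_left n j.
case: (leqP j n) => hj.
  by rewrite -(mulfK h1 ('C(n,j.+1))%:R) -natrM mulnC e natrM natrB // [_ * (_ - _)]mulrC.
rewrite (bin_small hj) (@bin_small n j.+1 (ltnW hj)).
by rewrite !mul0r.
Qed.

Definition D (k : nat) (g : nat -> rat) :=
  \sum_(0 <= m < k.+1) (-1) ^+ m * ('C(k, m))%:R * g m.

Lemma DS k g : D k.+1 g = D k g - D k (fun m => g m.+1).
Proof.
rewrite /D big_nat_recl // [in X in _ = X - _]big_nat_recl //.
have -> : \sum_(0 <= i < k.+1) (-1) ^+ i.+1 * 'C(k.+1, i.+1)%:R * g i.+1 =
  \sum_(0 <= i < k.+1) (-1) ^+ i.+1 * 'C(k, i.+1)%:R * g i.+1 -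
  \sum_(0 <= i < k.+1) (-1) ^+ i * 'C(k, i)%:R * g i.+1.
  rewrite -sumrB; apply: eq_bigr => i _; rewrite binS natrD exprS; ring.
rewrite big_nat_recr //= (@bin_small k k.+1) // !bin0 mulr0 mul0r addr0; ring.
Qed.

Lemma Dlin k g h : D k (fun m => g m - h m) = D k g - D k h.
Proof. by rewrite /D -sumrB; apply: eq_bigr => i _; ring. Qed.

Lemma Dconst k c : D k.+1 (fun _ => c) = 0.
Proof. by rewrite DS subrr. Qed.

Lemma Dext k g h : (forall m, g m = h m) -> D k g = D k h.
Proof. by move=> e; apply: eq_bigr => i _; rewrite e. Qed.

Definition f l := fun m : nat => gbinom (m%:R / 2) l.

Lemma Srec k l : D k.+2 (f l.+1) = 2 * D k.+1 (f l.+1) + D k (f l).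
Proof.
rewrite !DS.
have -> : D k (f l) = D k (fun m => f l.+1 m.+1.+1 - f l.+1 m).
  apply: Dext => m; rewrite /f -gb_pascal; congr (gbinom _ _ - _).
  by rewrite -addn2 natrD; field.
have E := Dlin k (fun m => f l.+1 m.+2) (f l.+1); simpl in E; rewrite E; ring.
Qed.

Lemma odd_dfactS e : odd_dfact e.+1 = (odd_dfact e * (2 * e + 1))%N.
Proof. by rewrite /odd_dfact big_ord_recr. Qed.

Lemma even_dfactS e : even_dfact e.+1 = (even_dfact e * (2 * e.+1))%N.
Proof. rewrite /even_dfact expnS factS; ring. Qed.

Lemma even_nz e : (even_dfact e)%:R != 0 :> rat.
Proof. by rewrite pnatr_eq0 /even_dfact muln_eq0 negb_or expn_eq0 -lt0n fact_gt0. Qed.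

Lemma odd_nz e : (odd_dfact e)%:R != 0 :> rat.
Proof. by rewrite pnatr_eq0 /odd_dfact -lt0n prodn_gt0 // => i; rewrite addn1. Qed.

Lemma even_ratS e : (even_dfact e.+1)%:R = (even_dfact e)%:R * (2 * (e%:R + 1)) :> rat.
Proof. by rewrite even_dfactS natrM natrM natr1. Qed.

Lemma odd_ratS e : (odd_dfact e.+1)%:R = (odd_dfact e)%:R * (2 * e%:R + 1) :> rat.
Proof. by rewrite odd_dfactS natrM natrD natrM. Qed.

Lemma half_gb l : gbinom (1 / 2) l.+1 = (-1) ^+ l * (odd_dfact l)%:R / (even_dfact l.+1)%:R.
Proof.
elim: l => [|l IH].
  by rewrite gbS gb0 /odd_dfact /even_dfact big_ord0 /= expn1 muln1 expr0; field.
rewrite gbS IH odd_ratS (even_ratS l.+1) exprS.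
have h1 := even_nz l.+1.
rewrite -!natr1.
by field; rewrite h1 !natr1 pnatr_eq0.
Qed.

Lemma cast_sub a b c : (a = b + c + 1)%N -> a%:R - c%:R - 1 = b%:R :> rat.
Proof. by move=> ->; rewrite !natrD; ring. Qed.

Lemma fact_ratS n : (n.+1)`!%:R = (n%:R + 1) * (n`!)%:R :> rat.
Proof. by rewrite factS natrM natr1. Qed.

Lemma main_id k e : let l := (k + e + 1)%N in
  (-1) ^+ l.+1 / (even_dfact l.+1)%:R * Pnk l.+1 k.+2 =
  2 * ((-1) ^+ l.+1 / (even_dfact l.+1)%:R * Pnk l.+1 k.+1)
  + (-1) ^+ l / (even_dfact l)%:R * Pnk l k.
Proof.
move=> l; rewrite /Pnk.
have -> : (l.+1 - k.+2 = e)%N by rewrite /l; lia.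
have -> : (l.+1 - k.+1 = e.+1)%N by rewrite /l; lia.
have -> : (l - k = e.+1)%N by rewrite /l; lia.
set N := (k + 2 * e + 1)%N.
rewrite (@cast_sub (2 * l.+1) N k.+2); last by rewrite /N /l; lia.
rewrite (@cast_sub (2 * l.+1) N.+1 k.+1); last by rewrite /N /l; lia.
rewrite (@cast_sub (2 * l) N k); last by rewrite /N /l; lia.
rewrite !gb_nat.
have -> : (2 * e.+1 = (2 * e).+2)%N by lia.
rewrite binS natrD.
have B1 := mul_bin_left N (2 * e).
have B2 := mul_bin_left N (2 * e).+1.
have t1 : (N - 2 * e = k.+1)%N by rewrite /N; lia.
have t2 : (N - (2 * e).+1 = k)%N by rewrite /N; lia.
rewrite t1 in B1; rewrite t2 in B2.
have h1 : (k.+1)%:R != 0 :> rat by rewrite pnatr_eq0.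
have h2 : ((2 * e).+2)%:R != 0 :> rat by rewrite pnatr_eq0.
have Ea : ('C(N, 2 * e))%:R = ((2 * e).+1)%:R * ('C(N, (2 * e).+1))%:R / (k.+1)%:R :> rat.
  by rewrite -natrM B1 natrM mulrC mulKf.
have Ec : ('C(N, (2 * e).+2))%:R = k%:R * ('C(N, (2 * e).+1))%:R / ((2 * e).+2)%:R :> rat.
  by rewrite -natrM -B2 natrM mulrC mulKf.
rewrite Ea Ec.
rewrite /l (even_ratS (k + e + 1)) odd_ratS !fact_ratS exprS.
have h3 := even_nz (k + e + 1).
have hk := ler0n rat k; have he := ler0n rat e.
field; rewrite ?h3 ?andbT /=; repeat (apply/andP; split); apply: lt0r_neq0; lra.
Qed.

Definition R k l := if (l < k)%N then 0 else (-1) ^+ l / (even_dfact l)%:R * Pnk l k.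

Lemma D0 g : D 0 g = g 0%N.
Proof. rewrite /D big_nat1 expr0 bin0; ring. Qed.

Lemma even0 : even_dfact 0 = 1%N. Proof. by []. Qed.
Lemma odd0 : odd_dfact 0 = 1%N. Proof. by rewrite /odd_dfact big_ord0. Qed.

Lemma Pkk k : Pnk k k = (k`!)%:R.
Proof. by rewrite /Pnk subnn odd0 muln0 gb0 !mulr1. Qed.

Lemma base0 l : D 0 (f l) = R 0 l.
Proof.
rewrite D0 /f /R /= mul0r (gb_nat 0).
case: l => [|l]; first by rewrite bin0 Pkk even0 expr0 fact0; field.
rewrite bin0n /Pnk subn0.
rewrite (@cast_sub (2 * l.+1) (2 * l + 1) 0); last by lia.
rewrite gb_nat bin_small ?mulr0 //; lia.
Qed.

Lemma base1 l : D 1 (f l) = R 1 l.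
Proof.
rewrite DS !D0 /f /R /= mul0r (gb_nat 0).
case: l => [|l]; first by rewrite bin0 gb0 subrr.
rewrite bin0n sub0r /= mul1r half_gb /Pnk subSS subn0.
rewrite (@cast_sub (2 * l.+1) (2 * l) 1); last by lia.
rewrite gb_nat binn factS fact0 muln1 exprS; field.
exact: even_nz.
Qed.

Lemma allP k : (forall l, D k (f l) = R k l) /\ (forall l, D k.+1 (f l) = R k.+1 l).
Proof.
elim: k => [|k [IH1 IH2]]; first by split; [exact: base0 | exact: base1].
split => // -[|l].
  rewrite (@Dext _ _ (fun _ => 1)); first by rewrite Dconst /R.
  by move=> m; rewrite /f gb0.
rewrite Srec IH1 IH2 /R.
case: (ltnP l k) => hlk.
  have -> : (l.+1 < k.+2)%N = true by lia.
  have -> : (l.+1 < k.+1)%N = true by lia.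
  by rewrite ?hlk mulr0 addr0.
case: (ltnP k l) => hkl; last first.
  have -> : l = k by apply/eqP; rewrite eqn_leq hkl hlk.
  have -> : (k.+1 < k.+2)%N = true by lia.
  have -> : (k.+1 < k.+1)%N = false by lia.
  rewrite ?add0r ?mulr0 !Pkk fact_ratS even_ratS exprS.
  have h3 := even_nz k.
  have hk := ler0n rat k.
  by field; rewrite h3 /=; apply: lt0r_neq0; lra.
have [e ->] : exists e, l = (k + e + 1)%N by exists (l - k.+1)%N; lia.
have -> : ((k + e + 1).+1 < k.+2)%N = false by lia.
have -> : ((k + e + 1).+1 < k.+1)%N = false by lia.
by rewrite main_id.
Qed.

Theorem lemma2p2 (k l : nat) :
  \sum_(0 <= m < k.+1) (-1) ^+ m * ('C(k, m))%:R * gbinom (m%:R / 2) l =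
  (if (l < k)%N then 0
   else (-1) ^+ l / (even_dfact l)%:R * Pnk l k).
Proof. exact: (proj1 (allP k) l). Qed.
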